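(* Let $\alpha:R\to R'$ be a Jordan homomorphism and let $R''$ be the subring of $R'$ generated by $R^\alpha$. Let $H$ and $H''$ be the centres of $E_2(R)$ and $E_2(R'')$, respectively. Then: (a) for every finite sequence $T$ in $R$, $E(T)\in H$ implies $E(T^\alpha)\in H''$; (b) the set $N_\alpha:=\{E(T^\alpha)\mid T \text{ a finite sequence in } R \text{ with } E(T)=I\}$ is contained in $H''$; (c) $N_\alpha$ is a normal subgroup of $E_2(R'')$, and the mapping $\alpha_E:E_2(R)\to E_2(R'')/N_\alpha$, $E(T)\mapsto N_\alpha\cdot E(T^\alpha)$ (for finite sequences $T$ in $R$) is a well defined homomorphism of groups.
   Context: Rings are associative with $1$, preserved by homomorphisms and inherited by subrings. A Jordan homomorphism $\alpha:R\to R'$ is a map with $(a+b)^\alpha=a^\alpha+b^\alpha$, $1^\alpha=1'$, $(aba)^\alpha=a^\alpha b^\alpha a^\alpha$ for all $a,b\in R$. For $t$ in a ring let $E(t):=\begin{pmatrix} t&1\\-1&0\end{pmatrix}$; for a finite sequence $T=(t_1,\ldots,t_n)$ ($n\geq 0$) let $E(T):=E(t_1)E(t_2)\cdots E(t_n)$ (the identity $I$ if $n=0$), and $T^\alpha:=(t_1^\alpha,\ldots,t_n^\alpha)$. $E_2(R)$ is the subgroup of $GL_2(R)$ generated by all $E(t)$, $t\in R$; every element of $E_2(R)$ has the form $E(T)$. Its centre is $E_2(R)\cap\{\mathrm{diag}(a,a)\mid a \text{ a central unit of } R\}$. *)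

(* Defs.v *)
From HB Require Import structures.
From mathcomp Require Import all_boot all_order all_algebra.
Set Implicit Arguments. Unset Strict Implicit. Unset Printing Implicit Defensive.
Import GRing.Theory.
Local Open Scope ring_scope.

Definition jordan_hom (R R' : pzRingType) (f : R -> R') : Prop :=
  [/\ forall a b, f (a + b) = f a + f b,
      f 1 = 1 &
      forall a b, f (a * b * a) = f a * f b * f a].

Definition gen_subring (R R' : pzRingType) (f : R -> R') (x : R') : Prop :=
  forall S : R' -> Prop,
    S 1 -> (forall a b, S a -> S b -> S (a - b)) ->
    (forall a b, S a -> S b -> S (a * b)) ->
    (forall r, S (f r)) -> S x.

(* E(t) = [[t, 1], [-1, 0]] *)
Definition Emx (R : pzRingType) (t : R) : 'M[R]_2 :=
  \matrix_(i < 2, j < 2)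
    if (i : nat) == 0%N then (if (j : nat) == 0%N then t else 1)
    else (if (j : nat) == 0%N then -1 else 0).

Definition Eseq (R : pzRingType) (T : seq R) : 'M[R]_2 :=
  foldr (fun t M => Emx t *m M) 1%:M T.

(* E_2(S) for a subring S of R, realized inside 'M[R]_2:
   the matrices E(T) with T a finite sequence of elements of S. *)
Definition E2on (R : pzRingType) (S : R -> Prop) (M : 'M[R]_2) : Prop :=
  exists T : seq R, (forall t, t \in T -> S t) /\ M = Eseq T.

Definition E2 (R : pzRingType) : 'M[R]_2 -> Prop := E2on (fun _ => True).

Definition centre (R : pzRingType) (G : 'M[R]_2 -> Prop) (M : 'M[R]_2) : Prop :=
  G M /\ forall g, G g -> M *m g = g *m M.

Definition normal_subgroup (R : pzRingType) (G N : 'M[R]_2 -> Prop) : Prop :=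
  [/\ forall M, N M -> G M,
      N 1%:M,
      forall X Y, N X -> N Y -> N (X *m Y),
      forall X Y, N X -> X *m Y = 1%:M -> Y *m X = 1%:M -> N Y &
      forall g g' X, G g -> g *m g' = 1%:M -> g' *m g = 1%:M -> N X ->
        N (g *m X *m g')].

Definition coset (R : pzRingType) (N : 'M[R]_2 -> Prop) (A : 'M[R]_2)
  (M : 'M[R]_2) : Prop := exists X, N X /\ M = X *m A.

Definition setmul (R : pzRingType) (P Q : 'M[R]_2 -> Prop) (M : 'M[R]_2) : Prop :=
  exists X Y, P X /\ Q Y /\ M = X *m Y.

Definition Nalpha (R R' : pzRingType) (f : R -> R') (M : 'M[R']_2) : Prop :=
  exists T : seq R, Eseq T = 1%:M /\ M = Eseq (map f T).

(* Main.v *)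
Require Import Defs.
From mathcomp Require Import all_boot all_order all_algebra.
Set Implicit Arguments. Unset Strict Implicit.
Import GRing.Theory.
Local Open Scope ring_scope.

Definition i0 : 'I_2 := @Ordinal 2 0 isT.
Definition i1 : 'I_2 := @Ordinal 2 1 isT.

Lemma ord2P (i : 'I_2) : i = i0 \/ i = i1.
Proof. case: i => [[|[|n]] Hn]; [left|right|by []]; exact: val_inj. Qed.

Lemma mul2E (X : pzRingType) (A B : 'M[X]_2) i j :
  (A *m B) i j = A i i0 * B i0 j + A i i1 * B i1 j.
Proof.
rewrite mxE big_ord_recl big_ord_recl big_ord0 addr0.
have -> : (lift ord0 ord0 : 'I_2) = i1 by apply: val_inj.
by have -> : (ord0 : 'I_2) = i0 by apply: val_inj.
Qed.

Lemma EmxE (X : pzRingType) (t : X) :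
  [/\ Emx t i0 i0 = t, Emx t i0 i1 = 1, Emx t i1 i0 = -1 & Emx t i1 i1 = 0].
Proof. by rewrite /Emx !mxE. Qed.

Lemma Eseq_cons (X : pzRingType) t (T : seq X) : Eseq (t :: T) = Emx t *m Eseq T.
Proof. by []. Qed.

Lemma Eseq_cat (X : pzRingType) (T1 T2 : seq X) : Eseq (T1 ++ T2) = Eseq T1 *m Eseq T2.
Proof. elim: T1 => [|t T IH] /=; first by rewrite mul1mx. by rewrite IH mulmxA. Qed.

Lemma Eseq_rev_cons (X : pzRingType) t (T : seq X) :
  Eseq (rev (t :: T)) = Eseq (rev T) *m Emx t.
Proof. by rewrite rev_cons -cats1 Eseq_cat /= mulmx1. Qed.

Lemma Eseq_map (X Y : pzRingType) (f : X -> Y) T1 T2 :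
  Eseq (map f (T1 ++ T2)) = Eseq (map f T1) *m Eseq (map f T2).
Proof. by rewrite map_cat Eseq_cat. Qed.

Lemma M0_cons (X : pzRingType) t (T : seq X) j :
  Eseq (t :: T) i0 j = t * Eseq T i0 j + Eseq T i1 j.
Proof. by rewrite Eseq_cons mul2E; case: (EmxE t) => -> -> _ _; rewrite mul1r. Qed.
Lemma M1_cons (X : pzRingType) t (T : seq X) j :
  Eseq (t :: T) i1 j = - Eseq T i0 j.
Proof. by rewrite Eseq_cons mul2E; case: (EmxE t) => _ _ -> ->; rewrite mul0r addr0 mulN1r. Qed.
Lemma N0_cons (X : pzRingType) t (T : seq X) i :
  Eseq (rev (t :: T)) i i0 = Eseq (rev T) i i0 * t - Eseq (rev T) i i1.
Proof. by rewrite Eseq_rev_cons mul2E; case: (EmxE t) => -> _ -> _; rewrite mulrN1. Qed.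
Lemma N1_cons (X : pzRingType) t (T : seq X) i :
  Eseq (rev (t :: T)) i i1 = Eseq (rev T) i i0.
Proof. by rewrite Eseq_rev_cons mul2E; case: (EmxE t) => _ -> _ ->; rewrite mulr0 addr0 mulr1. Qed.


Definition Sg (X : pzRingType) : 'M[X]_2 := \matrix_(i, j) (if i == j then 0 else 1).

Lemma SgE (X : pzRingType) :
  [/\ Sg X i0 i0 = 0, Sg X i0 i1 = 1, Sg X i1 i0 = 1 & Sg X i1 i1 = 0].
Proof. by rewrite /Sg !mxE. Qed.

Lemma oneE (X : pzRingType) :
  [/\ (1%:M : 'M[X]_2) i0 i0 = 1, (1%:M : 'M[X]_2) i0 i1 = 0,
      (1%:M : 'M[X]_2) i1 i0 = 0 & (1%:M : 'M[X]_2) i1 i1 = 1].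
Proof. by rewrite !mxE. Qed.

Lemma SgSg (X : pzRingType) : Sg X *m Sg X = 1%:M.
Proof.
apply/matrixP => i j; case: (ord2P i) => ->; case: (ord2P j) => ->;
rewrite mul2E; case: (SgE X) => s1 s2 s3 s4; case: (oneE X) => o1 o2 o3 o4;
rewrite ?s1 ?s2 ?s3 ?s4 ?o1 ?o2 ?o3 ?o4;
by rewrite ?mulr0 ?mul0r ?mulr1 ?addr0 ?add0r.
Qed.

Definition Kof (X : pzRingType) (N : 'M[X]_2) := Sg X *m N *m Sg X.

Lemma KofE (X : pzRingType) (N : 'M[X]_2) :
  [/\ Kof N i0 i0 = N i1 i1, Kof N i0 i1 = N i1 i0,
      Kof N i1 i0 = N i0 i1 & Kof N i1 i1 = N i0 i0].
Proof.
rewrite /Kof !mul2E; case: (SgE X) => -> -> -> ->.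
by rewrite !mulr0 !mulr1 !mul0r !mul1r !addr0 !add0r.
Qed.

Lemma EKE (X : pzRingType) (t : X) : Emx t *m Kof (Emx t) = 1%:M.
Proof.
apply/matrixP => i j; case: (ord2P i) => ->; case: (ord2P j) => ->;
rewrite mul2E; case: (KofE (Emx t)) => k1 k2 k3 k4;
case: (EmxE t) => e1 e2 e3 e4; case: (oneE X) => o1 o2 o3 o4;
rewrite ?k1 ?k2 ?k3 ?k4 ?e1 ?e2 ?e3 ?e4 ?o1 ?o2 ?o3 ?o4;
by rewrite ?mulr0 ?mul0r ?mulr1 ?mul1r ?addr0 ?add0r ?mulrN1 ?mulN1r ?subrr ?opprK // addNr.
Qed.

Lemma KEE (X : pzRingType) (t : X) : Kof (Emx t) *m Emx t = 1%:M.
Proof.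
apply/matrixP => i j; case: (ord2P i) => ->; case: (ord2P j) => ->;
rewrite mul2E; case: (KofE (Emx t)) => k1 k2 k3 k4;
case: (EmxE t) => e1 e2 e3 e4; case: (oneE X) => o1 o2 o3 o4;
rewrite ?k1 ?k2 ?k3 ?k4 ?e1 ?e2 ?e3 ?e4 ?o1 ?o2 ?o3 ?o4;
by rewrite ?mulr0 ?mul0r ?mulr1 ?mul1r ?addr0 ?add0r ?mulrN1 ?mulN1r ?subrr ?opprK // addNr.
Qed.

Lemma Kof_mul (X : pzRingType) (A B : 'M[X]_2) : Kof (A *m B) = Kof A *m Kof B.
Proof.
by rewrite /Kof -!mulmxA (mulmxA (Sg X) (Sg X)) SgSg mul1mx.
Qed.

Lemma inv_seq (X : pzRingType) (T : seq X) :
  Eseq T *m Kof (Eseq (rev T)) = 1%:M /\ Kof (Eseq (rev T)) *m Eseq T = 1%:M.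
Proof.
elim: T => [|t T [IH1 IH2]].
  by rewrite /= /Kof !mulmx1 !mul1mx SgSg.
rewrite Eseq_cons Eseq_rev_cons Kof_mul; split.
  by rewrite mulmxA -(mulmxA (Emx t)) IH1 mulmx1 EKE.
by rewrite mulmxA -(mulmxA _ (Kof (Emx t))) KEE mulmx1 IH2.
Qed.


Lemma Z1 (V : zmodType) (a b c d : V) : a - b - (c - d) = a - (b + c) + d.
Proof. by rewrite opprB opprD addrA [a + (- b - c)]addrA addrAC. Qed.
Lemma Z2 (V : zmodType) (a b c d : V) : a - b + (c - d) = a + c - (b + d).
Proof. by rewrite opprD addrACA. Qed.

Lemma L_g2 (X : pzRingType) (t p q u v r : X) :
 (t * p - q) * r * (u * t - v) = t * (p * r * u) * t - (q * r * u * t + t * (p * r * v)) + q * r * v.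
Proof. by rewrite !(mulrBl, mulrBr) !mulrA Z1. Qed.
Lemma L_m (X : pzRingType) (t p q u v r s : X) :
 p * r * (u * t - v) * s + s * ((t * p - q) * r * u) =
 (p * r * u * t * s + s * t * (p * r * u)) - (p * r * v * s + s * (q * r * u)).
Proof. by rewrite !(mulrBl, mulrBr) !mulrA Z2. Qed.
Lemma L_mt (X : pzRingType) (t p q u v r s : X) :
 (t * p - q) * r * u * s + s * (p * r * (u * t - v)) =
 (t * (p * r * u) * s + s * (p * r * u) * t) - (q * r * u * s + s * (p * r * v)).
Proof. by rewrite !(mulrBl, mulrBr) !mulrA Z2. Qed.

Definition Pc (X : pzRingType) (j : 'I_2) (T : seq X) := Eseq T i0 j.
Definition Qc (X : pzRingType) (j : 'I_2) (T : seq X) := - Eseq T i1 j.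
Definition Ur (X : pzRingType) (i : 'I_2) (T : seq X) := Eseq (rev T) i i0.
Definition Vr (X : pzRingType) (i : 'I_2) (T : seq X) := Eseq (rev T) i i1.

Definition g1 (X : pzRingType) i j (r : X) T := Qc j T * r * Vr i T.
Definition g2 (X : pzRingType) i j (r : X) T := Pc j T * r * Ur i T.
Definition mm (X : pzRingType) i j (r : X) T s :=
  Qc j T * r * Ur i T * s + s * (Pc j T * r * Vr i T).
Definition mt (X : pzRingType) i j (r : X) T s :=
  Pc j T * r * Vr i T * s + s * (Qc j T * r * Ur i T).

Lemma Pc_cons (X : pzRingType) j t (T : seq X) : Pc j (t :: T) = t * Pc j T - Qc j T.
Proof. by rewrite /Pc /Qc M0_cons opprK. Qed.
Lemma Qc_cons (X : pzRingType) j t (T : seq X) : Qc j (t :: T) = Pc j T.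
Proof. by rewrite /Pc /Qc M1_cons opprK. Qed.
Lemma Ur_cons (X : pzRingType) i t (T : seq X) : Ur i (t :: T) = Ur i T * t - Vr i T.
Proof. by rewrite /Ur /Vr N0_cons. Qed.
Lemma Vr_cons (X : pzRingType) i t (T : seq X) : Vr i (t :: T) = Ur i T.
Proof. by rewrite /Ur /Vr N1_cons. Qed.

Lemma g1_cons (X : pzRingType) i j r t (T : seq X) : g1 i j r (t :: T) = g2 i j r T.
Proof. by rewrite /g1 /g2 Qc_cons Vr_cons. Qed.
Lemma g2_cons (X : pzRingType) i j r t (T : seq X) :
  g2 i j r (t :: T) = t * g2 i j r T * t - mm i j r T t + g1 i j r T.
Proof. by rewrite /g1 /g2 /mm Pc_cons Ur_cons L_g2. Qed.
Lemma mm_cons (X : pzRingType) i j r t (T : seq X) s :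
  mm i j r (t :: T) s = (g2 i j r T * t * s + s * t * g2 i j r T) - mt i j r T s.
Proof. by rewrite /g2 /mm /mt Pc_cons Ur_cons Qc_cons Vr_cons L_m. Qed.
Lemma mt_cons (X : pzRingType) i j r t (T : seq X) s :
  mt i j r (t :: T) s = (t * g2 i j r T * s + s * g2 i j r T * t) - mm i j r T s.
Proof. by rewrite /g2 /mm /mt Pc_cons Ur_cons Qc_cons Vr_cons L_mt. Qed.

Lemma Z3 (V : zmodType) (x y z w : V) : x + y + (z + w) - x - w = z + y.
Proof.
rewrite (addrC x) -(addrA y) (addrC x) addrA.
by rewrite (addrK x) addrA (addrK w) addrC.
Qed.

Lemma jadd (R R' : pzRingType) (f : R -> R') : jordan_hom f ->
  [/\ f 0 = 0, forall a, f (- a) = - f a & forall a b, f (a - b) = f a - f b].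
Proof.
case=> fD f1 fJ.
have f0 : f 0 = 0 by apply: (addrI (f 0)); rewrite addr0 -fD addr0.
have fN : forall a, f (- a) = - f a.
  by move=> a; apply/eqP; rewrite -subr_eq0 opprK -fD addNr f0.
by split=> // a b; rewrite fD fN.
Qed.

Lemma jtriple (R R' : pzRingType) (f : R -> R') : jordan_hom f ->
  forall a b c, f (a * b * c + c * b * a) = f a * f b * f c + f c * f b * f a.
Proof.
move=> hf; case: (hf) => fD f1 fJ; case: (jadd hf) => f0 fN fB a b c.
have E : a * b * c + c * b * a = (a + c) * b * (a + c) - a * b * a - c * b * c.
  by rewrite !(mulrDl, mulrDr) ?mulrA Z3.
by rewrite E !fB fJ fJ fJ fD !(mulrDl, mulrDr) ?mulrA Z3.
Qed.


Lemma sys_rel (R R' : pzRingType) (f : R -> R') (hf : jordan_hom f) i j (r : R) (T : seq R) :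
  f (g1 i j r [::]) = g1 i j (f r) [::] ->
  f (g2 i j r [::]) = g2 i j (f r) [::] ->
  (forall s, f (mm i j r [::] s) = mm i j (f r) [::] (f s)) ->
  (forall s, f (mt i j r [::] s) = mt i j (f r) [::] (f s)) ->
  [/\ f (g1 i j r T) = g1 i j (f r) (map f T),
      f (g2 i j r T) = g2 i j (f r) (map f T),
      (forall s, f (mm i j r T s) = mm i j (f r) (map f T) (f s)) &
      (forall s, f (mt i j r T s) = mt i j (f r) (map f T) (f s))].
Proof.
move=> B1 B2 B3 B4; case: (hf) => fD f1 fJ; case: (jadd hf) => f0 fN fB.
have fT := jtriple hf.
elim: T => [|t T [I1 I2 I3 I4]] //=.
split.
- by rewrite !g1_cons.
- by rewrite !g2_cons fD fB fJ I1 I2 I3.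
- by move=> s; rewrite !mm_cons fB fT I2 I4.
- by move=> s; rewrite !mt_cons fB fT I2 I3.
Qed.

Lemma final_alg (X : pzRingType) (a b c d e f g h : X) :
  a * h + b * f = 1 -> a * g + b * e = 0 -> c * h + d * f = 0 -> c * g + d * e = 1 ->
  h * a + g * c = 1 -> h * b + g * d = 0 -> f * a + e * c = 0 -> f * b + e * d = 1 ->
  a * e = 1 -> c * f = 0 -> b * g = 0 -> d * h = 1 -> c * h = 0 -> a * g = 0 ->
  [/\ b = 0, c = 0, d = a & e * a = 1].
Proof.
move=> I1 I2 I3 I4 I5 I6 I7 I8 ae cf bg dh ch ag.
have ed : e * d = 1 - f * b by rewrite -I8 addrAC subrr add0r.
have ce : c * e = 0.
  by rewrite -[c * e]mulr1 -dh mulrA -(mulrA c e d) ed mulrBr mulr1 mulrBl mulrA cf !mul0r ch subr0.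
have dg : d * g = 0.
  by rewrite -[d * g]mul1r -ae -mulrA (mulrA e) ed mulrBl mul1r mulrBr -!mulrA bg !mulr0 ag subr0.
have af : a * f = 0.
  have H : a * (f * a + e * c) * e = 0 by rewrite I7 mulr0 mul0r.
  by move: H; rewrite mulrDr mulrDl -!mulrA ae ce mulr1 !mulr0 addr0.
have bh : b * h = 0.
  have H : d * (h * b + g * d) * h = 0 by rewrite I6 mulr0 mul0r.
  by move: H; rewrite mulrDr mulrDl -!mulrA dh mulr1 dg addr0 mulrA dh mul1r.
have c0 : c = 0 by rewrite -[c]mulr1 -I8 mulrDr !mulrA cf ce !mul0r addr0.
have b0 : b = 0 by rewrite -[b]mulr1 -I5 mulrDr !mulrA bh bg !mul0r addr0.
have da : d = a by rewrite -[a]mulr1 -I8 mulrDr !mulrA af ae mul0r mul1r add0r.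
by split=> //; rewrite -da -I8 b0 mulr0 add0r.
Qed.


Lemma inv_ids (X : pzRingType) (M N : 'M[X]_2) :
  M *m Kof N = 1%:M -> Kof N *m M = 1%:M ->
  [/\ M i0 i0 * N i1 i1 + M i0 i1 * N i0 i1 = 1,
      M i0 i0 * N i1 i0 + M i0 i1 * N i0 i0 = 0,
      M i1 i0 * N i1 i1 + M i1 i1 * N i0 i1 = 0 &
      M i1 i0 * N i1 i0 + M i1 i1 * N i0 i0 = 1] /\
  [/\ N i1 i1 * M i0 i0 + N i1 i0 * M i1 i0 = 1,
      N i1 i1 * M i0 i1 + N i1 i0 * M i1 i1 = 0,
      N i0 i1 * M i0 i0 + N i0 i0 * M i1 i0 = 0 &
      N i0 i1 * M i0 i1 + N i0 i0 * M i1 i1 = 1].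
Proof.
move=> H1 H2; case: (KofE N) => k1 k2 k3 k4; case: (oneE X) => o1 o2 o3 o4.
move: (Kof N) H1 H2 k1 k2 k3 k4 => K H1 H2 k1 k2 k3 k4.
have E1 := congr1 (fun A : 'M[X]_2 => A i0 i0) H1; have E2 := congr1 (fun A : 'M[X]_2 => A i0 i1) H1.
have E3 := congr1 (fun A : 'M[X]_2 => A i1 i0) H1; have E4 := congr1 (fun A : 'M[X]_2 => A i1 i1) H1.
have E5 := congr1 (fun A : 'M[X]_2 => A i0 i0) H2; have E6 := congr1 (fun A : 'M[X]_2 => A i0 i1) H2.
have E7 := congr1 (fun A : 'M[X]_2 => A i1 i0) H2; have E8 := congr1 (fun A : 'M[X]_2 => A i1 i1) H2.
move: E1 E2 E3 E4 E5 E6 E7 E8 => /=; rewrite !mul2E ?k1 ?k2 ?k3 ?k4 ?o1 ?o2 ?o3 ?o4.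
by move=> -> -> -> -> -> -> -> ->; split.
Qed.

Lemma centre_R (X : pzRingType) (M : 'M[X]_2) :
  (forall t, M *m Emx t = Emx t *m M) ->
  [/\ M i0 i1 = 0, M i1 i0 = 0, M i1 i1 = M i0 i0 & forall t, M i0 i0 * t = t * M i0 i0].
Proof.
move=> H.
have F := fun t i j => congr1 (fun A : 'M[X]_2 => A i j) (H t).
have := F 0 i0 i0; have := F 0 i0 i1; have := F 1 i0 i1; have := F 0 i1 i0.
rewrite /= !mul2E; case: (EmxE (0 : X)) => z1 z2 z3 z4; case: (EmxE (1 : X)) => u1 u2 u3 u4.
rewrite ?z1 ?z2 ?z3 ?z4 ?u1 ?u2 ?u3 ?u4 ?mulr0 ?mul0r ?mulr1 ?mul1r ?add0r ?addr0 ?mulrN1.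
rewrite ?mulN1r.
move=> E0 E1 E2 E3.
have dA : M i1 i1 = M i0 i0 by rewrite E2.
have b0 : M i0 i1 = 0 by apply: (addIr (M i1 i1)); rewrite -E1 add0r E2.
have c0 : M i1 i0 = 0 by rewrite -E3 b0 oppr0.
split=> // t.
have := F t i0 i0; rewrite /= !mul2E; case: (EmxE t) => -> -> _ _.
by rewrite b0 c0 mul0r mulr0 !addr0.
Qed.


Ltac simp0 := rewrite ?oppr0 ?mulr0 ?mul0r ?mulr1 ?mul1r ?addr0 ?add0r ?mulN1r ?mulrN1.

Lemma core_a (R R' : pzRingType) (f : R -> R') (hf : jordan_hom f) (T : seq R) :
  (forall t, Eseq T *m Emx t = Emx t *m Eseq T) ->
  let M' := Eseq (map f T) in
  [/\ M' i0 i1 = 0, M' i1 i0 = 0, M' i1 i1 = M' i0 i0 &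
      forall r, M' i0 i0 * f r = f r * M' i0 i0].
Proof.
move=> HC M'.
case: (hf) => fD f1 fJ; case: (jadd hf) => f0 fN fB.
have [Mb Mc Md Ma] := centre_R HC.
have [IK1 IK2] := inv_seq T.
have [[J1 J2 J3 J4] [J5 J6 J7 J8]] := inv_ids IK1 IK2.
set a := Eseq T i0 i0 in Md Ma J1 J2 J3 J4 J5 J6 J7 J8.
set N := Eseq (rev T) in J1 J2 J3 J4 J5 J6 J7 J8.
rewrite Mb Mc Md !mul0r !mulr0 ?addr0 ?add0r in J1 J2 J3 J4 J5 J6 J7 J8.
have ha : N i1 i1 * a = 1 by [].
have ah : a * N i1 i1 = 1 by [].
have g0 : N i1 i0 = 0 by rewrite -[N i1 i0]mul1r -ha -mulrA J2 mulr0.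
have f0' : N i0 i1 = 0 by rewrite -[N i0 i1]mulr1 -ah mulrA J7 mul0r.
have [o1 o2 o3 o4] := oneE R; have [p1 p2 p3 p4] := oneE R'.
Ltac base o1 o2 o3 o4 p1 p2 p3 p4 f0 f1 fN :=
  rewrite /g1 /g2 /mm /mt /Pc /Qc /Ur /Vr /= ?o1 ?o2 ?o3 ?o4 ?p1 ?p2 ?p3 ?p4;
  simp0; rewrite ?f0 ?f1 ?fN ?f1; simp0.
have SA : forall r, [/\ f (g1 i0 i0 r T) = g1 i0 i0 (f r) (map f T),
      f (g2 i0 i0 r T) = g2 i0 i0 (f r) (map f T),
      (forall s, f (mm i0 i0 r T s) = mm i0 i0 (f r) (map f T) (f s)) &
      (forall s, f (mt i0 i0 r T s) = mt i0 i0 (f r) (map f T) (f s))].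
  move=> r; apply: sys_rel => // *; base o1 o2 o3 o4 p1 p2 p3 p4 f0 f1 fN => //.
have SB : [/\ f (g1 i1 i1 1 T) = g1 i1 i1 (f 1) (map f T),
      f (g2 i1 i1 1 T) = g2 i1 i1 (f 1) (map f T),
      (forall s, f (mm i1 i1 1 T s) = mm i1 i1 (f 1) (map f T) (f s)) &
      (forall s, f (mt i1 i1 1 T s) = mt i1 i1 (f 1) (map f T) (f s))].
  apply: sys_rel => // *; base o1 o2 o3 o4 p1 p2 p3 p4 f0 f1 fN => //.
have SC : [/\ f (g1 i1 i0 1 T) = g1 i1 i0 (f 1) (map f T),
      f (g2 i1 i0 1 T) = g2 i1 i0 (f 1) (map f T),
      (forall s, f (mm i1 i0 1 T s) = mm i1 i0 (f 1) (map f T) (f s)) &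
      (forall s, f (mt i1 i0 1 T s) = mt i1 i0 (f 1) (map f T) (f s))].
  apply: sys_rel => // *; base o1 o2 o3 o4 p1 p2 p3 p4 f0 f1 fN => //.
have [IK1' IK2'] := inv_seq (map f T).
have [[K1 K2 K3 K4] [K5 K6 K7 K8]] := inv_ids IK1' IK2'.
set N' := Eseq (rev (map f T)) in K1 K2 K3 K4 K5 K6 K7 K8.
have FA : forall r, M' i0 i0 * f r * N' i0 i0 = f r.
  move=> r; have [_ E _ _] := SA r; move: E.
  rewrite /g2 /Pc /Ur -/a -/N Ma -mulrA J4 mulr1 -/M' -/N' => E.
  by rewrite -E.
have [FA1 _ _ _] := SA 1.
have [FB1 FB2 _ _] := SB.
have [FC1 FC2 _ _] := SC.
move: FA1 FB1 FB2 FC1 FC2; rewrite /g1 /g2 /Pc /Qc /Ur /Vr -/a -/N -/M' -/N'.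
rewrite Mb Mc Md g0 f0' f1; simp0; rewrite ?f0 !mulNr ah fN f1.
move=> /esym/eqP; rewrite oppr_eq0 => /eqP cf /oppr_inj/esym dh /esym bg.
move=> /esym/eqP; rewrite oppr_eq0 => /eqP ch /esym ag.
have ae : M' i0 i0 * N' i0 i0 = 1 by have := FA 1; rewrite f1 mulr1.
have [b0 c0 da ea] := final_alg K1 K2 K3 K4 K5 K6 K7 K8 ae cf bg dh ch ag.
split=> // r.
by rewrite -{2}(FA r) -mulrA ea mulr1.
Qed.


Lemma scal_comm_E (X : pzRingType) (M : 'M[X]_2) (s : X) :
  M i0 i1 = 0 -> M i1 i0 = 0 -> M i1 i1 = M i0 i0 -> M i0 i0 * s = s * M i0 i0 ->
  M *m Emx s = Emx s *m M.
Proof.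
move=> b0 c0 da hs; apply/matrixP => i j.
case: (ord2P i) => ->; case: (ord2P j) => ->; rewrite !mul2E;
case: (EmxE s) => e1 e2 e3 e4; rewrite ?e1 ?e2 ?e3 ?e4 ?b0 ?c0 ?da;
by rewrite ?mulr0 ?mul0r ?mulr1 ?mul1r ?addr0 ?add0r ?mulrN1 ?mulN1r.
Qed.

Lemma scal_comm (X : pzRingType) (M : 'M[X]_2) (S : seq X) :
  M i0 i1 = 0 -> M i1 i0 = 0 -> M i1 i1 = M i0 i0 ->
  (forall s, s \in S -> M i0 i0 * s = s * M i0 i0) ->
  M *m Eseq S = Eseq S *m M.
Proof.
move=> b0 c0 da; elim: S => [|s S IH] HS /=; first by rewrite mulmx1 mul1mx.
have hs : M i0 i0 * s = s * M i0 i0 by apply: HS; rewrite inE eqxx.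
have HS' : forall x, x \in S -> M i0 i0 * x = x * M i0 i0.
  by move=> x xS; apply: HS; rewrite inE xS orbT.
by rewrite mulmxA scal_comm_E // -mulmxA IH // mulmxA.
Qed.

Lemma gen_comm (R R' : pzRingType) (f : R -> R') (a : R') :
  (forall r, a * f r = f r * a) -> forall y, gen_subring f y -> a * y = y * a.
Proof.
move=> H y hy; apply: (hy (fun y => a * y = y * a)).
- by rewrite mulr1 mul1r.
- by move=> x z hx hz; rewrite mulrBr mulrBl hx hz.
- by move=> x z hx hz; rewrite mulrA hx -mulrA hz mulrA.
- exact: H.
Qed.

Lemma E2on_map (R R' : pzRingType) (f : R -> R') (T : seq R) :
  E2on (gen_subring f) (Eseq (map f T)).
Proof.
exists (map f T); split=> // t /mapP [r _ ->] S _ _ _ H; exact: H.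
Qed.

Definition invseq (X : pzRingType) (T : seq X) : seq X :=
  foldr (fun t acc => acc ++ [:: 0; - t; 0]) [::] T.

Lemma Einv3 (X : pzRingType) (t : X) : Eseq [:: 0; - t; 0] = Kof (Emx t).
Proof.
rewrite /= mulmx1; apply/matrixP => i j.
case: (KofE (Emx t)) => k1 k2 k3 k4.
case: (ord2P i) => ->; case: (ord2P j) => ->; rewrite ?k1 ?k2 ?k3 ?k4 !mul2E;
case: (EmxE t) => e1 e2 e3 e4; case: (EmxE (-t)) => n1 n2 n3 n4;
case: (EmxE (0 : X)) => z1 z2 z3 z4;
rewrite ?e1 ?e2 ?e3 ?e4 ?n1 ?n2 ?n3 ?n4 ?z1 ?z2 ?z3 ?z4;
by rewrite ?mulr0 ?mul0r ?mulr1 ?mul1r ?addr0 ?add0r ?mulrN1 ?mulN1r ?opprK.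
Qed.

Lemma invseqP (X : pzRingType) (T : seq X) :
  Eseq T *m Eseq (invseq T) = 1%:M /\ Eseq (invseq T) *m Eseq T = 1%:M.
Proof.
elim: T => [|t T [IH1 IH2]] /=; first by rewrite mulmx1.
rewrite Eseq_cat Einv3; split.
  by rewrite -mulmxA (mulmxA (Eseq T)) IH1 mul1mx EKE.
by rewrite mulmxA -(mulmxA _ _ (Emx t)) KEE mulmx1 IH2.
Qed.

Lemma map_invseq (R R' : pzRingType) (f : R -> R') (hf : jordan_hom f) (T : seq R) :
  map f (invseq T) = invseq (map f T).
Proof.
case: (jadd hf) => f0 fN _.
by elim: T => [|t T IH] //=; rewrite map_cat IH /= f0 fN.
Qed.


Lemma part_a (R R' : pzRingType) (f : R -> R') (hf : jordan_hom f) (T : seq R) :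
  centre (E2 (R:=R)) (Eseq T) -> centre (E2on (gen_subring f)) (Eseq (map f T)).
Proof.
case=> _ HC.
have HC' : forall t, Eseq T *m Emx t = Emx t *m Eseq T.
  move=> t; have := HC (Eseq [:: t]); rewrite /= mulmx1; apply.
  by exists [:: t]; split=> //=; rewrite mulmx1.
have [b0 c0 da ha] := core_a hf HC'.
split; first exact: E2on_map.
move=> g [S [HS ->]]; apply: scal_comm => // s sS.
apply: (gen_comm ha); exact: HS.
Qed.

Lemma part_b (R R' : pzRingType) (f : R -> R') (hf : jordan_hom f) M :
  Nalpha f M -> centre (E2on (gen_subring f)) M.
Proof.
case=> T [E1 ->]; apply: part_a => //; rewrite E1; split.
  by exists [::]; split.
by move=> g _; rewrite mul1mx mulmx1.
Qed.

Lemma Nal_mul (R R' : pzRingType) (f : R -> R') X Y :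
  Nalpha f X -> Nalpha f Y -> Nalpha f (X *m Y).
Proof.
case=> T1 [E1 ->] [T2 [E2 ->]]; exists (T1 ++ T2).
by rewrite Eseq_cat E1 E2 mulmx1 Eseq_map.
Qed.

Lemma Nal_one (R R' : pzRingType) (f : R -> R') : Nalpha f 1%:M.
Proof. by exists [::]. Qed.

Lemma wd1 (R R' : pzRingType) (f : R -> R') (hf : jordan_hom f) (T1 T2 : seq R) :
  Eseq T1 = Eseq T2 -> forall M,
  coset (Nalpha f) (Eseq (map f T1)) M -> coset (Nalpha f) (Eseq (map f T2)) M.
Proof.
move=> E M [X [NX ->]].
have Nn : Nalpha f (Eseq (map f (T1 ++ invseq T2))).
  exists (T1 ++ invseq T2); split=> //.
  by rewrite Eseq_cat E (invseqP T2).1.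
exists (X *m Eseq (map f (T1 ++ invseq T2))); split; first exact: Nal_mul.
rewrite map_cat (map_invseq hf) Eseq_cat -!mulmxA (invseqP (map f T2)).2.
by rewrite mulmx1.
Qed.

Unset Implicit Arguments.
Unset Strict Implicit.

Theorem theorem3p6 (R R' : pzRingType) (f : R -> R') (hf : jordan_hom f) :
  (* (a) *)
  (forall T : seq R, centre (E2 (R:=R)) (Eseq T) ->
     centre (E2on (gen_subring f)) (Eseq (map f T))) /\
  (* (b) *)
  (forall M, Nalpha f M -> centre (E2on (gen_subring f)) M) /\
  (* (c) normality *)
  normal_subgroup (E2on (gen_subring f)) (Nalpha f) /\
  (* (c) α_E : E(T) ↦ N_α·E(T^α) is well defined ... *)
  (forall T1 T2 : seq R, Eseq T1 = Eseq T2 ->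
     forall M, coset (Nalpha f) (Eseq (map f T1)) M <->
               coset (Nalpha f) (Eseq (map f T2)) M) /\
  (* ... and a group homomorphism into E_2(R'')/N_α *)
  (forall T1 T2 T3 : seq R, Eseq T3 = Eseq T1 *m Eseq T2 ->
     forall M, coset (Nalpha f) (Eseq (map f T3)) M <->
               setmul (coset (Nalpha f) (Eseq (map f T1)))
                      (coset (Nalpha f) (Eseq (map f T2))) M).
Proof.
have WD : forall T1 T2 : seq R, Eseq T1 = Eseq T2 ->
     forall M, coset (Nalpha f) (Eseq (map f T1)) M <->
               coset (Nalpha f) (Eseq (map f T2)) M.
  by move=> T1 T2 E M; split; apply: wd1.
split; first by move=> T; apply: part_a.
split; first by move=> M; apply: part_b.
split.
  split.
  - by move=> M /(part_b hf) [].
  - exact: Nal_one.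
  - exact: Nal_mul.
  - move=> X Y [T [E1 ->]] XY YX.
    have -> : Y = Eseq (map f (invseq T)).
      rewrite (map_invseq hf) -[Y]mulmx1 -(invseqP (map f T)).1 mulmxA YX.
      by rewrite mul1mx.
    exists (invseq T); split=> //.
    by rewrite -[Eseq (invseq T)]mul1mx -E1 (invseqP T).1.
  - move=> g g' X Gg gg' g'g NX.
    have [_ C] := part_b hf NX.
    by rewrite -C // -mulmxA gg' mulmx1.
split; first exact: WD.
move=> T1 T2 T3 E M.
have E' : Eseq T3 = Eseq (T1 ++ T2) by rewrite Eseq_cat.
apply: (iff_trans (WD _ _ E' M)).
rewrite Eseq_map; split.
  case=> X [NX ->]; exists (X *m Eseq (map f T1)), (1%:M *m Eseq (map f T2)).
  split; first by exists X.
  split; first by exists 1%:M; split=> //; exact: Nal_one.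
  by rewrite mul1mx mulmxA.
case=> P [Q [[X [NX ->]] [[Y [NY ->]] ->]]].
exists (X *m Y); split; first exact: Nal_mul.
have [_ C] := part_b hf NY.
rewrite -(mulmxA X) (mulmxA (Eseq (map f T1))) -C; last exact: E2on_map.
by rewrite !mulmxA.
Qed.
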